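(* Let $\alpha,\beta>0$, let $c(\psi)=\sqrt{\alpha\cos^2\psi+\beta\sin^2\psi}$, let $p\ge0$ be an integer, let $C>0$ and $\theta\ge 1/2$, and let $X_{\Delta x}^p(\Omega)$ be the discontinuous piecewise polynomial space on the periodic mesh described in the context. Suppose $R,S,\psi:[0,T]\to X_{\Delta x}^p(\Omega)$ are differentiable in time and, for every $t\in[0,T]$, satisfy (with $c=c(\psi(x,t))$ inside integrals, $x$-derivatives taken cellwise, sums over $j=1,\dots,N$) $$\sum_j\int_{\Omega_j}R_t\phi\,dx+\sum_j\int_{\Omega_j}cR\phi_x\,dx-\sum_j\Big(\overline{c}_{j+1/2}\overline{R}_{j+1/2}+\tfrac12 s_{j+1/2}\llbracket R\rrbracket_{j+1/2}\Big)\phi^-_{j+1/2}+\sum_j\Big(\overline{c}_{j-1/2}\overline{R}_{j-1/2}+\tfrac12 s_{j-1/2}\llbracket R\rrbracket_{j-1/2}\Big)\phi^+_{j-1/2}=\mathcal{B}(\phi)-\sum_j\varepsilon_j\int_{\Omega_j}R_x\phi_x\,dx$$ for all $\phi\in X_{\Delta x}^p(\Omega)$, $$\sum_j\int_{\Omega_j}S_t\eta\,dx-\sum_j\int_{\Omega_j}cS\eta_x\,dx+\sum_j\Big(\overline{c}_{j+1/2}\overline{S}_{j+1/2}-\tfrac12 s_{j+1/2}\llbracket S\rrbracket_{j+1/2}\Big)\eta^-_{j+1/2}-\sum_j\Big(\overline{c}_{j-1/2}\overline{S}_{j-1/2}-\tfrac12 s_{j-1/2}\llbracket S\rrbracket_{j-1/2}\Big)\eta^+_{j-1/2}=\mathcal{B}(\eta)-\sum_j\varepsilon_j\int_{\Omega_j}S_x\eta_x\,dx$$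 for all $\eta\in X_{\Delta x}^p(\Omega)$, and $\sum_j\int_{\Omega_j}\psi_t\zeta\,dx=\sum_j\int_{\Omega_j}\frac{R+S}{2}\zeta\,dx$ for all $\zeta\in X_{\Delta x}^p(\Omega)$. Here, for a test function $\chi$, $$\mathcal{B}(\chi)=\tfrac12\sum_j\int_{\Omega_j}c(R\chi)_x\,dx-\tfrac12\sum_j\overline{c}_{j+1/2}R^-_{j+1/2}\chi^-_{j+1/2}+\tfrac12\sum_j\overline{c}_{j-1/2}R^+_{j-1/2}\chi^+_{j-1/2}-\tfrac12\sum_j\int_{\Omega_j}c(S\chi)_x\,dx+\tfrac12\sum_j\overline{c}_{j+1/2}S^-_{j+1/2}\chi^-_{j+1/2}-\tfrac12\sum_j\overline{c}_{j-1/2}S^+_{j-1/2}\chi^+_{j-1/2},$$ $s_{j+1/2}=\max\{c^-_{j+1/2},c^+_{j+1/2}\}$, and $$\varepsilon_j=\frac{\Delta x_j\,C\,\big(\int_{\Omega_j}\mathrm{Res}^2\,dx\big)^{1/2}}{\big(\int_{\Omega_j}(R_x^2+S_x^2)\,dx\big)^{1/2}+\Delta x_j^\theta},\qquad \mathrm{Res}=(R^2+S^2)_t-\big(c(\psi)(R^2-S^2)\big)_x .$$ Then $$\frac{d}{dt}\left(\sum_{j=1}^N\int_{\Omega_j}\frac{R^2+S^2}{2}\,dx\right)\le 0.$$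
   Context: The domain $\Omega$ is partitioned into cells $\Omega_j=[x_{j-1/2},x_{j+1/2}]$, $j=1,\dots,N$, with $\Delta x_j=x_{j+1/2}-x_{j-1/2}$. $X_{\Delta x}^p(\Omega)=\{u\in L^2(\Omega): u|_{\Omega_j}$ is a polynomial of degree $\le p$ for each $j\}$. For a grid function $u$, $u^+_{j+1/2}$ and $u^-_{j+1/2}$ denote its traces at $x_{j+1/2}$ from the right and left respectively; $\overline{u}_{j+1/2}=(u^+_{j+1/2}+u^-_{j+1/2})/2$ and $\llbracket u\rrbracket_{j+1/2}=u^+_{j+1/2}-u^-_{j+1/2}$. Also $c^\pm_{j+1/2}=c(\psi^\pm_{j+1/2})$ and $\overline{c}_{j+1/2}=(c^+_{j+1/2}+c^-_{j+1/2})/2$. Periodic boundary conditions: the endpoints $x_{1/2}$ and $x_{N+1/2}$ are identified, i.e. $u^-_{1/2}:=u^-_{N+1/2}$ (trace from cell $N$) and $u^+_{N+1/2}:=u^+_{1/2}$ (trace from cell $1$), for all grid functions including $\psi$ and the test functions. *)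

(* Defs.v *)
From Stdlib Require Import Reals Lra.
From Coquelicot Require Import Coquelicot.
Open Scope R_scope.

Definition cfun (al be ps : R) : R := sqrt (al * cos ps ^ 2 + be * sin ps ^ 2).

Definition is_poly_deg (p : nat) (f : R -> R) : Prop :=
  exists a : nat -> R, forall x, f x = sum_f_R0 (fun k => a k * x ^ k) p.

(* A grid function: cell index j (meaningful for 1 <= j <= N) |-> the
   restriction of u to Omega_j, extended (as a polynomial) to all of R. *)
Definition grid := nat -> R -> R.

Definition in_X (N p : nat) (u : grid) : Prop :=
  forall j, (1 <= j <= N)%nat -> is_poly_deg p (u j).

Fixpoint sumj (N : nat) (F : nat -> R) : R :=
  match N with O => 0 | S n => sumj n F + F (S n) end.

(* Mesh: xs i = x_{i+1/2}, i = 0..N; Omega_j = [xs (j-1), xs j], j = 1..N. *)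
Definition cellint (xs : nat -> R) (j : nat) (f : R -> R) : R :=
  RInt f (xs (j - 1)%nat) (xs j).

Definition dx (xs : nat -> R) (j : nat) : R := xs j - xs (j - 1)%nat.

(* traces at interface x_{i+1/2}, i = 0..N, with periodic identification *)
Definition tr_minus (N : nat) (xs : nat -> R) (u : grid) (i : nat) : R :=
  if Nat.eqb i 0 then u N (xs N) else u i (xs i).
Definition tr_plus (N : nat) (xs : nat -> R) (u : grid) (i : nat) : R :=
  if Nat.eqb i N then u 1%nat (xs 0%nat) else u (S i) (xs i).
Definition avg N xs (u : grid) i : R := (tr_plus N xs u i + tr_minus N xs u i) / 2.
Definition jump N xs (u : grid) i : R := tr_plus N xs u i - tr_minus N xs u i.

Definition cbar al be N xs (ps : grid) i : R :=
  (cfun al be (tr_plus N xs ps i) + cfun al be (tr_minus N xs ps i)) / 2.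
Definition sint al be N xs (ps : grid) i : R :=
  Rmax (cfun al be (tr_minus N xs ps i)) (cfun al be (tr_plus N xs ps i)).

Definition Bterm al be N xs (r s ps chi : grid) : R :=
  / 2 * sumj N (fun j => cellint xs j
           (fun y => cfun al be (ps j y) * Derive (fun z => r j z * chi j z) y))
  - / 2 * sumj N (fun j => cbar al be N xs ps j * tr_minus N xs r j * tr_minus N xs chi j)
  + / 2 * sumj N (fun j => cbar al be N xs ps (j - 1)%nat * tr_plus N xs r (j - 1)%nat
                             * tr_plus N xs chi (j - 1)%nat)
  - / 2 * sumj N (fun j => cellint xs j
           (fun y => cfun al be (ps j y) * Derive (fun z => s j z * chi j z) y))
  + / 2 * sumj N (fun j => cbar al be N xs ps j * tr_minus N xs s j * tr_minus N xs chi j)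
  - / 2 * sumj N (fun j => cbar al be N xs ps (j - 1)%nat * tr_plus N xs s (j - 1)%nat
                             * tr_plus N xs chi (j - 1)%nat).

Definition dt (U : R -> grid) (t : R) : grid := fun j x => Derive (fun s => U s j x) t.

Definition Res al be (Rf Sf Pf : R -> grid) (t : R) (j : nat) (x : R) : R :=
  Derive (fun s => Rf s j x ^ 2 + Sf s j x ^ 2) t
  - Derive (fun y => cfun al be (Pf t j y) * (Rf t j y ^ 2 - Sf t j y ^ 2)) x.

Definition eps al be (C th : R) (xs : nat -> R) (Rf Sf Pf : R -> grid) (t : R) (j : nat) : R :=
  dx xs j * C * sqrt (cellint xs j (fun x => Res al be Rf Sf Pf t j x ^ 2))
  / (sqrt (cellint xs j (fun x => Derive (Rf t j) x ^ 2 + Derive (Sf t j) x ^ 2))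
     + Rpower (dx xs j) th).

Definition eqR al be C th N xs (Rf Sf Pf : R -> grid) (t : R) (phi : grid) : Prop :=
  let r := Rf t in let s := Sf t in let ps := Pf t in
  sumj N (fun j => cellint xs j (fun x => dt Rf t j x * phi j x))
  + sumj N (fun j => cellint xs j (fun x => cfun al be (ps j x) * r j x * Derive (phi j) x))
  - sumj N (fun j => (cbar al be N xs ps j * avg N xs r j
                      + / 2 * sint al be N xs ps j * jump N xs r j) * tr_minus N xs phi j)
  + sumj N (fun j => (cbar al be N xs ps (j - 1)%nat * avg N xs r (j - 1)%nat
                      + / 2 * sint al be N xs ps (j - 1)%nat * jump N xs r (j - 1)%nat)
                     * tr_plus N xs phi (j - 1)%nat)
  = Bterm al be N xs r s ps phi
    - sumj N (fun j => eps al be C th xs Rf Sf Pf t j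
                       * cellint xs j (fun x => Derive (r j) x * Derive (phi j) x)).

Definition eqS al be C th N xs (Rf Sf Pf : R -> grid) (t : R) (eta : grid) : Prop :=
  let r := Rf t in let s := Sf t in let ps := Pf t in
  sumj N (fun j => cellint xs j (fun x => dt Sf t j x * eta j x))
  - sumj N (fun j => cellint xs j (fun x => cfun al be (ps j x) * s j x * Derive (eta j) x))
  + sumj N (fun j => (cbar al be N xs ps j * avg N xs s j
                      - / 2 * sint al be N xs ps j * jump N xs s j) * tr_minus N xs eta j)
  - sumj N (fun j => (cbar al be N xs ps (j - 1)%nat * avg N xs s (j - 1)%nat
                      - / 2 * sint al be N xs ps (j - 1)%nat * jump N xs s (j - 1)%nat)
                     * tr_plus N xs eta (j - 1)%nat)
  = Bterm al be N xs r s ps eta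
    - sumj N (fun j => eps al be C th xs Rf Sf Pf t j
                       * cellint xs j (fun x => Derive (s j) x * Derive (eta j) x)).

Definition eqPsi N xs (Rf Sf Pf : R -> grid) (t : R) (zeta : grid) : Prop :=
  sumj N (fun j => cellint xs j (fun x => dt Pf t j x * zeta j x))
  = sumj N (fun j => cellint xs j (fun x => (Rf t j x + Sf t j x) / 2 * zeta j x)).

Definition energy N xs (Rf Sf : R -> grid) (t : R) : R :=
  sumj N (fun j => cellint xs j (fun x => (Rf t j x ^ 2 + Sf t j x ^ 2) / 2)).

(* Main.v *)
Require Import Defs.
From Stdlib Require Import Reals Lra Lia.
From Coquelicot Require Import Coquelicot.
Open Scope R_scope.

Inductive horner : nat -> (R -> R) -> Prop :=
| h0 : forall c f, (forall x, f x = c) -> horner 0 f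
| hS : forall p g c f, horner p g -> (forall x, f x = c + x * g x) -> horner (S p) f.

Lemma horner_ext p f g : horner p f -> (forall x, f x = g x) -> horner p g.
Proof.
  intros H E; destruct H as [c f Hf | p g0 c f Hg Hf].
  - apply (h0 c); intros x; rewrite <- E; auto.
  - apply (hS p g0 c); auto. intros x; rewrite <- E; auto.
Qed.

Lemma horner_zero p : horner p (fun _ => 0).
Proof.
  induction p. apply (h0 0); auto.
  apply (hS p (fun _ => 0) 0); auto. intros; ring.
Qed.

Lemma horner_S p f : horner p f -> horner (S p) f.
Proof.
  intros H; induction H as [c f Hf | p g c f Hg IH Hf].
  - apply (hS 0 (fun _ => 0) c). apply (h0 0); auto. intros; rewrite Hf; ring.
  - apply (hS (S p) g c); auto.
Qed.

Lemma horner_le p q f : horner p f -> (p <= q)%nat -> horner q f.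
Proof.
  intros H Hle; induction Hle; auto. apply horner_S; auto.
Qed.

Lemma horner_const p c : horner p (fun _ => c).
Proof. apply horner_le with 0%nat. apply (h0 c); auto. lia. Qed.

Lemma horner_plus p f g : horner p f -> horner p g -> horner p (fun x => f x + g x).
Proof.
  intros H; revert g; induction H as [c f Hf | p g0 c f Hg IH Hf]; intros g Hg'.
  - inversion Hg'; subst. apply (h0 (c + c0)); intros; rewrite Hf, H; auto.
  - inversion Hg'; subst. apply (hS p (fun x => g0 x + g1 x) (c + c0)).
    apply IH; auto. intros; match goal with Hx : forall x, g x = _ |- _ => rewrite Hf, Hx end; ring.
Qed.

Lemma horner_scal p k f : horner p f -> horner p (fun x => k * f x).
Proof.
  intros H; induction H as [c f Hf | p g0 c f Hg IH Hf].
  - apply (h0 (k * c)); intros; rewrite Hf; auto.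
  - apply (hS p (fun x => k * g0 x) (k * c)); auto. intros; rewrite Hf; ring.
Qed.

Lemma horner_mulx p f : horner p f -> horner (S p) (fun x => x * f x).
Proof. intros H. apply (hS p f 0); auto. intros; ring. Qed.

Lemma horner_mul p q f g : horner p f -> horner q g -> horner (p + q) (fun x => f x * g x).
Proof.
  intros H; revert g; induction H as [c f Hf | p g0 c f Hg IH Hf]; intros g Hg'.
  - simpl. apply horner_ext with (fun x => c * g x). apply horner_scal; auto.
    intros; rewrite Hf; auto.
  - simpl. apply horner_ext with (fun x => c * g x + x * (g0 x * g x)).
    apply horner_plus. apply horner_le with q. apply horner_scal; auto. lia.
    apply horner_mulx. apply IH; auto.
    intros; rewrite Hf; ring.
Qed.

Lemma horner_sum p n (F : nat -> R -> R) :
  (forall i, (i <= n)%nat -> horner p (F i)) -> horner p (fun x => sum_f_R0 (fun i => F i x) n).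
Proof.
  induction n; intros H; simpl.
  - apply H; lia.
  - apply horner_plus. apply IHn; intros; apply H; lia. apply H; lia.
Qed.

Lemma poly_horner p f : is_poly_deg p f -> horner p f.
Proof.
  revert f; induction p; intros f [a Ha].
  - apply (h0 (a 0%nat)); intros; rewrite Ha; simpl; ring.
  - apply (hS p (fun x => sum_f_R0 (fun k => a (S k) * x ^ k) p) (a 0%nat)).
    apply IHp. exists (fun k => a (S k)); auto.
    intros x; rewrite Ha, decomp_sum by lia. simpl pred. rewrite scal_sum.
    f_equal. simpl; ring. apply sum_eq; intros; simpl; ring.
Qed.

Lemma horner_factor p f z : horner p f ->
  exists h, horner (pred p) h /\ forall x, f x - f z = (x - z) * h x.
Proof.
  intros H; induction H as [c f Hf | p g c f Hg IH Hf].
  - exists (fun _ => 0); split. apply horner_zero. intros; rewrite !Hf; ring.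
  - destruct IH as [h [Hh E]]. exists (fun x => g x + z * h x); split.
    + simpl. apply horner_plus; auto. apply horner_scal. apply horner_le with (pred p); auto; lia.
    + intros x; rewrite !Hf. transitivity ((x - z) * g x + z * (g x - g z)). ring.
      rewrite E; ring.
Qed.

Lemma horner_roots p f : horner p f -> (forall i, (i <= p)%nat -> f (INR i) = 0) -> forall x, f x = 0.
Proof.
  revert f; induction p; intros f H Hr x.
  - inversion H; subst. rewrite H0. rewrite <- (H0 (INR 0)). apply Hr; lia.
  - destruct (horner_factor _ _ (INR (S p)) H) as [h [Hh E]]. simpl in Hh.
    assert (Hz : f (INR (S p)) = 0) by (apply Hr; lia).
    assert (Hh0 : forall y, h y = 0).
    { apply IHp; auto. intros i Hi. specialize (E (INR i)). rewrite Hr, Hz in E by lia.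
      assert (INR i - INR (S p) <> 0).
      { intro C. assert (Hq : INR i = INR (S p)) by lra. apply INR_eq in Hq. lia. }
      symmetry in E. rewrite Rminus_0_r in E. apply Rmult_integral in E as [C|C]. lra. auto. }
    specialize (E x). rewrite Hh0, Hz in E. lra.
Qed.

Fixpoint lagp (i m : nat) (x : R) : R :=
  match m with
  | O => 1
  | S m' => lagp i m' x * (if Nat.eqb m' i then 1 else (x - INR m') / (INR i - INR m'))
  end.

Lemma INR_neq a b : a <> b -> INR a - INR b <> 0.
Proof. intros H C. apply H, INR_eq. lra. Qed.

Lemma lagp_lin i m' : m' <> i -> horner 1 (fun x => (x - INR m') / (INR i - INR m')).
Proof.
  intros H. apply (hS 0 (fun _ => / (INR i - INR m')) (- INR m' / (INR i - INR m'))).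
  apply (h0 (/ (INR i - INR m'))); auto. intros x. unfold Rdiv. ring.
Qed.

Lemma lagp_h1 i m : (m <= i)%nat -> horner m (lagp i m).
Proof.
  induction m; intros H; simpl.
  - apply (h0 1); auto.
  - destruct (Nat.eqb_spec m i). lia.
    replace (S m) with (m + 1)%nat by lia. apply horner_mul. apply IHm; lia. apply lagp_lin; auto.
Qed.

Lemma lagp_h2 i m : (i < m)%nat -> horner (m - 1) (lagp i m).
Proof.
  induction m; intros H. lia. simpl.
  destruct (Nat.eqb_spec m i).
  - subst. rewrite Nat.sub_0_r. apply horner_ext with (lagp i i).
    apply lagp_h1; lia. intros; ring.
  - rewrite Nat.sub_0_r. replace m with ((m - 1) + 1)%nat at 1 by lia. apply horner_mul. apply IHm; lia.
    apply lagp_lin; auto.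
Qed.

Lemma lagp_one i m : lagp i m (INR i) = 1.
Proof.
  induction m; simpl; auto. rewrite IHm. destruct (Nat.eqb_spec m i). ring.
  field. apply INR_neq; auto.
Qed.

Lemma lagp_zero i m k : (k < m)%nat -> k <> i -> lagp i m (INR k) = 0.
Proof.
  induction m; intros H Hk. lia. simpl.
  destruct (Nat.eq_dec k m).
  - subst. destruct (Nat.eqb_spec m i). lia. unfold Rdiv. ring.
  - rewrite IHm by lia. ring.
Qed.

Lemma sum_delta (c : nat -> R) q n k : (k <= q)%nat ->
  sum_f_R0 (fun i => c i * lagp i (S q) (INR k)) n = if (k <=? n)%nat then c k else 0.
Proof.
  intros Hk. induction n.
  - cbn [sum_f_R0]. destruct k. rewrite lagp_one; simpl; ring. rewrite (lagp_zero 0) by lia. simpl; ring.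
  - cbn [sum_f_R0]. rewrite IHn. destruct (Nat.eq_dec k (S n)).
    + subst. rewrite lagp_one. replace (S n <=? n)%nat with false by (symmetry; apply Nat.leb_gt; lia).
      replace (S n <=? S n)%nat with true by (symmetry; apply Nat.leb_le; lia). ring.
    + rewrite (lagp_zero (S n)) by lia. destruct (Nat.leb_spec k n); destruct (Nat.leb_spec k (S n)); try lia; ring.
Qed.

Lemma interp q f : horner q f -> forall x, f x = sum_f_R0 (fun i => f (INR i) * lagp i (S q) x) q.
Proof.
  intros H x.
  assert (E : forall y, f y - sum_f_R0 (fun i => f (INR i) * lagp i (S q) y) q = 0).
  { apply (horner_roots q). apply horner_plus. auto. apply horner_scal with (k := -1) in H.
    apply horner_ext with (fun y => -1 * sum_f_R0 (fun i => f (INR i) * lagp i (S q) y) q).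
    apply horner_scal. apply horner_sum. intros i Hi. apply horner_scal.
    replace q with (S q - 1)%nat at 1 by lia. apply lagp_h2; lia. intros; ring.
    intros i Hi. rewrite sum_delta by auto. replace (i <=? q)%nat with true by (symmetry; apply Nat.leb_le; lia). ring. }
  specialize (E x). lra.
Qed.

Lemma horner_cont p f : horner p f -> forall x, continuous f x.
Proof.
  intros H; induction H as [c f Hf | p g c f Hg IH Hf]; intros x.
  - apply continuous_ext with (fun _ => c). intros; auto. apply continuous_const.
  - apply continuous_ext with (fun y => plus c (mult y (g y))). intros; rewrite Hf; reflexivity.
    apply (continuous_plus (fun _ : R => c) (fun y : R => mult y (g y))). apply continuous_const. apply (continuous_mult (fun y : R => y) g). apply continuous_id. auto.
Qed.

Lemma horner_exRInt p f a b : horner p f -> ex_RInt f a b.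
Proof. intros H. apply (ex_RInt_continuous (V := R_CompleteNormedModule)). intros; eapply horner_cont; eauto. Qed.

Lemma isd_plus (f g : R -> R) x a b : is_derive f x a -> is_derive g x b -> is_derive (fun y => f y + g y) x (a + b).
Proof. rewrite !is_derive_Reals. intros. apply (derivable_pt_lim_plus f g); auto. Qed.
Lemma isd_mult (f g : R -> R) x a b : is_derive f x a -> is_derive g x b -> is_derive (fun y => f y * g y) x (a * g x + f x * b).
Proof. rewrite !is_derive_Reals. intros. apply (derivable_pt_lim_mult f g); auto. Qed.
Lemma isd_const (c x : R) : is_derive (fun _ => c) x 0.
Proof. rewrite is_derive_Reals. apply derivable_pt_lim_const. Qed.
Lemma isd_id (x : R) : is_derive (fun y => y) x 1.
Proof. rewrite is_derive_Reals. apply derivable_pt_lim_id. Qed.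
Lemma isd_eq (f : R -> R) x a b : is_derive f x a -> a = b -> is_derive f x b.
Proof. intros; subst; auto. Qed.

Lemma horner_deriv p f : horner p f -> exists q g, horner q g /\ forall x, is_derive f x (g x).
Proof.
  intros H; induction H as [c f Hf | p g c f Hg IH Hf].
  - exists 0%nat, (fun _ => 0); split. apply (h0 0); auto. intros x.
    apply is_derive_ext with (fun _ => c). intros; auto. apply isd_const.
  - destruct IH as [q [g' [Hg' D]]]. exists (S (p + q)), (fun x => g x + x * g' x); split.
    apply horner_plus. apply horner_le with p; auto; lia. apply horner_mulx. apply horner_le with q; auto; lia.
    intros x. apply is_derive_ext with (fun y => c + y * g y). intros; rewrite Hf; auto.
    eapply isd_eq; [apply isd_plus; [apply isd_const | apply isd_mult; [apply isd_id | apply D]] | ]. simpl.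
    ring.
Qed.

Lemma RInt_sum n (c : nat -> R) (L : nat -> R -> R) a b :
  (forall i, ex_RInt (L i) a b) ->
  RInt (fun x => sum_f_R0 (fun i => c i * L i x) n) a b = sum_f_R0 (fun i => c i * RInt (L i) a b) n.
Proof.
  intros HL.
  assert (Hex : forall n, ex_RInt (fun x => sum_f_R0 (fun i => c i * L i x) n) a b).
  { induction n0; simpl. exact (ex_RInt_scal (L 0%nat) a b (c 0%nat) (HL 0%nat)).
    exact (ex_RInt_plus _ (fun x => scal (c (S n0)) (L (S n0) x)) a b IHn0 (ex_RInt_scal (L (S n0)) a b (c (S n0)) (HL _))). }
  induction n; simpl.
  - exact (RInt_scal (L 0%nat) a b (c 0%nat) (HL 0%nat)).
  - transitivity (RInt (fun x => sum_f_R0 (fun i => c i * L i x) n) a b + RInt (fun x => c (S n) * L (S n) x) a b).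
    exact (RInt_plus _ (fun x => scal (c (S n)) (L (S n) x)) a b (Hex n) (ex_RInt_scal _ a b _ (HL (S n)))).
    rewrite IHn. f_equal. exact (RInt_scal (L (S n)) a b (c (S n)) (HL (S n))).
Qed.

Definition wq q a b i := RInt (lagp i (S q)) a b.

Lemma quad q f a b : horner q f -> RInt f a b = sum_f_R0 (fun i => f (INR i) * wq q a b i) q.
Proof.
  intros H. unfold wq. rewrite <- RInt_sum.
  apply RInt_ext. intros; apply interp; auto.
  intros i. destruct (Compare_dec.le_lt_dec i q).
  apply horner_exRInt with (S q - 1)%nat. apply lagp_h2; lia.
  apply horner_exRInt with (S q). apply lagp_h1; lia.
Qed.

Lemma cfun_pos al be z : 0 < al -> 0 < be -> 0 < al * cos z ^ 2 + be * sin z ^ 2.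
Proof. intros. pose proof (sin2_cos2 z). unfold Rsqr in H1.
  destruct (Rle_dec (cos z ^ 2) (/2)). nra. nra. Qed.
Lemma cfun_cont al be z : 0 < al -> 0 < be -> continuous (cfun al be) z.
Proof. intros. apply (ex_derive_continuous (K:=R_AbsRing) (V:=R_NormedModule)). unfold cfun. auto_derive. apply cfun_pos; auto. Qed.

Lemma horner_Derive p f : horner p f -> (forall x, ex_derive f x) /\ forall x, continuous (Derive f) x.
Proof.
  intros H. destruct (horner_deriv p f H) as [q [g [Hg D]]]. split.
  intros x; exists (g x); auto.
  intros x. apply continuous_ext with g. intros; symmetry; apply is_derive_unique; auto.
  eapply horner_cont; eauto.
Qed.

Lemma key1 al be p (ps u : R -> R) a b : 0 < al -> 0 < be -> horner p ps -> horner p u ->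
  RInt (fun y => cfun al be (ps y) * Derive (fun z => u z * u z) y) a b
  = 2 * RInt (fun y => cfun al be (ps y) * u y * Derive u y) a b.
Proof.
  intros Hal Hbe Hps Hu. destruct (horner_Derive p u Hu) as [Hd Hc].
  transitivity (RInt (fun y => scal 2 (cfun al be (ps y) * u y * Derive u y)) a b).
  apply RInt_ext. intros x _. rewrite Derive_mult by auto. unfold scal; simpl; unfold mult; simpl. ring.
  apply (RInt_scal (fun y => cfun al be (ps y) * u y * Derive u y)).
  apply (ex_RInt_continuous (V := R_CompleteNormedModule)). intros z _.
  apply (continuous_mult (fun y => cfun al be (ps y) * u y) (Derive u)); auto.
  apply (continuous_mult (fun y => cfun al be (ps y)) u).
  apply (continuous_comp ps (cfun al be)). eapply horner_cont; eauto. apply cfun_cont; auto.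
  eapply horner_cont; eauto.
Qed.

Lemma sumj_ext n F G : (forall j, (1 <= j <= n)%nat -> F j = G j) -> sumj n F = sumj n G.
Proof. induction n; intros H; simpl; auto. rewrite IHn, H; [auto|lia|]. intros; apply H; lia. Qed.

Lemma sumj_nonneg n F : (forall j, (1 <= j <= n)%nat -> 0 <= F j) -> 0 <= sumj n F.
Proof. induction n; intros H; simpl. lra. assert (0 <= F (S n)) by (apply H; lia).
  assert (0 <= sumj n F) by (apply IHn; intros; apply H; lia). lra. Qed.

Lemma sumj_plus n F G : sumj n (fun j => F j + G j) = sumj n F + sumj n G.
Proof. induction n; simpl. ring. rewrite IHn; ring. Qed.

Lemma sumj_scal n k F : sumj n (fun j => k * F j) = k * sumj n F.
Proof. induction n; simpl. ring. rewrite IHn; ring. Qed.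

Lemma sumj_shift n G : G 0%nat = G n -> sumj n (fun j => G (j - 1)%nat) = sumj n G.
Proof.
  intros H. assert (E : forall m, sumj m (fun j => G (j - 1)%nat) + G m = G 0%nat + sumj m G).
  { induction m; simpl. ring. rewrite Nat.sub_0_r. lra. }
  specialize (E n). lra.
Qed.

Lemma trm0 N xs u : (1 <= N)%nat -> tr_minus N xs u 0 = tr_minus N xs u N.
Proof. intros H. unfold tr_minus. simpl. destruct (Nat.eqb_spec N 0). lia. auto. Qed.
Lemma trp0 N xs u : (1 <= N)%nat -> tr_plus N xs u 0 = tr_plus N xs u N.
Proof. intros H. unfold tr_plus. rewrite Nat.eqb_refl. destruct (Nat.eqb_spec 0 N). lia. auto. Qed.

Lemma isd_sum n (F : nat -> R -> R) d t : (forall i, (i <= n)%nat -> is_derive (F i) t (d i)) ->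
  is_derive (fun s => sum_f_R0 (fun i => F i s) n) t (sum_f_R0 d n).
Proof.
  induction n; intros H; simpl. apply H; lia.
  apply isd_plus. apply IHn; intros; apply H; lia. apply H; lia.
Qed.

Lemma isd_sumj n (F : nat -> R -> R) d t : (forall j, (1 <= j <= n)%nat -> is_derive (F j) t (d j)) ->
  is_derive (fun s => sumj n (fun j => F j s)) t (sumj n d).
Proof.
  induction n; intros H; simpl. apply isd_const.
  apply isd_plus. apply IHn; intros; apply H; lia. apply H; lia.
Qed.

Lemma loc_T t T : 0 < t < T -> locally t (fun s => 0 <= s <= T).
Proof.
  intros H. apply (locally_interval _ t 0 T); simpl; try lra. intros y H1 H2; lra.
Qed.

Lemma dt_horner p T (U : R -> grid) t j : 0 < t < T -> (forall s, 0 <= s <= T -> horner p (U s j)) ->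
  (forall x, ex_derive (fun s => U s j x) t) -> horner p (dt U t j).
Proof.
  intros Ht HU HD.
  apply horner_ext with (fun x => sum_f_R0 (fun i => Derive (fun s => U s j (INR i)) t * lagp i (S p) x) p).
  apply horner_sum. intros i Hi. apply horner_scal. replace p with (S p - 1)%nat at 1 by lia. apply lagp_h2; lia.
  intros x. unfold dt. symmetry. apply is_derive_unique.
  apply is_derive_ext_loc with (fun s => sum_f_R0 (fun i => U s j (INR i) * lagp i (S p) x) p).
  generalize (loc_T t T Ht). apply filter_imp. intros s Hs. symmetry. apply interp. auto.
  apply (isd_sum p (fun i s => U s j (INR i) * lagp i (S p) x)).
  intros i _. eapply isd_eq. apply isd_mult. apply Derive_correct. apply HD. apply isd_const. simpl; ring.
Qed.

Lemma cell_deriv p T (Rf Sf : R -> grid) t j a b : 0 < t < T ->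
  (forall s, 0 <= s <= T -> horner p (Rf s j) /\ horner p (Sf s j)) ->
  (forall x, ex_derive (fun s => Rf s j x) t /\ ex_derive (fun s => Sf s j x) t) ->
  is_derive (fun s => RInt (fun x => (Rf s j x ^ 2 + Sf s j x ^ 2) / 2) a b) t
    (RInt (fun x => dt Rf t j x * Rf t j x) a b + RInt (fun x => dt Sf t j x * Sf t j x) a b).
Proof.
  intros Ht HU HD.
  assert (Hq : forall s, 0 <= s <= T -> horner (p + p) (fun x => (Rf s j x ^ 2 + Sf s j x ^ 2) / 2)).
  { intros s Hs. destruct (HU s Hs) as [H1 H2].
    apply horner_ext with (fun x => / 2 * (Rf s j x * Rf s j x + Sf s j x * Sf s j x)).
    apply horner_scal. apply horner_plus; apply horner_mul; auto. intros; simpl; field. }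
  assert (HdR : horner p (dt Rf t j)). { apply dt_horner with T; auto. intros; apply (proj1 (HU _ H)). intros x; exact (proj1 (HD x)). }
  assert (HdS : horner p (dt Sf t j)). { apply dt_horner with T; auto. intros; apply (proj2 (HU _ H)). intros x; exact (proj2 (HD x)). }
  assert (Ht' : 0 <= t <= T) by lra.
  rewrite (quad (p + p) (fun x => dt Rf t j x * Rf t j x)) by (apply horner_mul; auto; apply HU; auto).
  rewrite (quad (p + p) (fun x => dt Sf t j x * Sf t j x)) by (apply horner_mul; auto; apply HU; auto).
  rewrite <- sum_plus.
  apply is_derive_ext_loc with (fun s => sum_f_R0 (fun i => (Rf s j (INR i) ^ 2 + Sf s j (INR i) ^ 2) / 2 * wq (p + p) a b i) (p + p)).
  generalize (loc_T t T Ht). apply filter_imp. intros s Hs. symmetry. apply quad. auto.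
  apply (isd_sum (p + p) (fun i s => (Rf s j (INR i) ^ 2 + Sf s j (INR i) ^ 2) / 2 * wq (p + p) a b i)).
  intros i _.
  apply is_derive_ext with (fun s => (Rf s j (INR i) * Rf s j (INR i) + Sf s j (INR i) * Sf s j (INR i)) * (/ 2 * wq (p + p) a b i)).
  intros; simpl; field.
  destruct (HD (INR i)) as [D1 D2].
  eapply isd_eq. apply isd_mult. apply isd_plus; apply isd_mult; apply Derive_correct; auto. apply isd_const.
  unfold dt. simpl. field.
Qed.

Lemma avg0 N xs u : (1 <= N)%nat -> avg N xs u 0 = avg N xs u N.
Proof. intros; unfold avg; rewrite trm0, trp0 by auto; auto. Qed.
Lemma jump0 N xs u : (1 <= N)%nat -> jump N xs u 0 = jump N xs u N.
Proof. intros; unfold jump; rewrite trm0, trp0 by auto; auto. Qed.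
Lemma cbar0 al be N xs u : (1 <= N)%nat -> cbar al be N xs u 0 = cbar al be N xs u N.
Proof. intros; unfold cbar; rewrite trm0, trp0 by auto; auto. Qed.
Lemma sint0 al be N xs u : (1 <= N)%nat -> sint al be N xs u 0 = sint al be N xs u N.
Proof. intros; unfold sint; rewrite trm0, trp0 by auto; auto. Qed.

Lemma comb_pt al be N xs (r s ps : grid) i :
  (cbar al be N xs ps i * avg N xs r i + / 2 * sint al be N xs ps i * jump N xs r i) * tr_minus N xs r i
  - (cbar al be N xs ps i * avg N xs r i + / 2 * sint al be N xs ps i * jump N xs r i) * tr_plus N xs r i
  - / 2 * (cbar al be N xs ps i * tr_minus N xs r i * tr_minus N xs r i)
  + / 2 * (cbar al be N xs ps i * tr_plus N xs r i * tr_plus N xs r i)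
  + / 2 * (cbar al be N xs ps i * tr_minus N xs s i * tr_minus N xs r i)
  - / 2 * (cbar al be N xs ps i * tr_plus N xs s i * tr_plus N xs r i)
  - (cbar al be N xs ps i * avg N xs s i - / 2 * sint al be N xs ps i * jump N xs s i) * tr_minus N xs s i
  + (cbar al be N xs ps i * avg N xs s i - / 2 * sint al be N xs ps i * jump N xs s i) * tr_plus N xs s i
  - / 2 * (cbar al be N xs ps i * tr_minus N xs r i * tr_minus N xs s i)
  + / 2 * (cbar al be N xs ps i * tr_plus N xs r i * tr_plus N xs s i)
  + / 2 * (cbar al be N xs ps i * tr_minus N xs s i * tr_minus N xs s i)
  - / 2 * (cbar al be N xs ps i * tr_plus N xs s i * tr_plus N xs s i)
  = - (sint al be N xs ps i / 2 * (jump N xs r i ^ 2 + jump N xs s i ^ 2)).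
Proof. unfold avg, jump. field. Qed.

Lemma eps_nonneg al be C th xs Rf Sf Pf t j : 0 < dx xs j -> 0 < C -> 0 <= eps al be C th xs Rf Sf Pf t j.
Proof.
  intros Hd HC. unfold eps. unfold Rdiv. apply Rmult_le_pos.
  apply Rmult_le_pos. apply Rmult_le_pos; lra. apply sqrt_pos.
  apply Rlt_le, Rinv_0_lt_compat. pose proof (sqrt_pos (cellint xs j (fun x => Derive (Rf t j) x ^ 2 + Derive (Sf t j) x ^ 2))).
  assert (0 < Rpower (dx xs j) th) by (unfold Rpower; apply exp_pos). lra.
Qed.

Lemma cell_sq_nonneg p xs j u : xs (j - 1)%nat <= xs j -> horner p u ->
  0 <= cellint xs j (fun x => Derive u x * Derive u x).
Proof.
  intros Hle Hu. destruct (horner_Derive p u Hu) as [_ Hc]. unfold cellint.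
  apply RInt_ge_0; auto.
  apply (ex_RInt_continuous (V := R_CompleteNormedModule)). intros z _.
  apply (continuous_mult (Derive u) (Derive u)); auto.
  intros; apply Rle_0_sqr.
Qed.

Lemma sint_nonneg al be N xs ps i : 0 <= sint al be N xs ps i.
Proof. unfold sint, cfun. eapply Rle_trans; [apply sqrt_pos | apply Rmax_l]. Qed.

Theorem proposition2p2 :
  forall (al be C th T : R) (p N : nat) (xs : nat -> R) (Rf Sf Pf : R -> grid),
    0 < al -> 0 < be -> 0 < C -> / 2 <= th -> 0 < T ->
    (1 <= N)%nat ->
    (forall i, (i < N)%nat -> xs i < xs (S i)) ->
    (forall t, 0 <= t <= T -> in_X N p (Rf t) /\ in_X N p (Sf t) /\ in_X N p (Pf t)) ->
    (forall t j x, 0 <= t <= T -> (1 <= j <= N)%nat ->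
       ex_derive (fun s => Rf s j x) t /\ ex_derive (fun s => Sf s j x) t
       /\ ex_derive (fun s => Pf s j x) t) ->
    (forall t, 0 <= t <= T -> forall phi, in_X N p phi -> eqR al be C th N xs Rf Sf Pf t phi) ->
    (forall t, 0 <= t <= T -> forall eta, in_X N p eta -> eqS al be C th N xs Rf Sf Pf t eta) ->
    (forall t, 0 <= t <= T -> forall zeta, in_X N p zeta -> eqPsi N xs Rf Sf Pf t zeta) ->
    forall t, 0 < t < T ->
      exists l, is_derive (energy N xs Rf Sf) t l /\ l <= 0.
Proof.
  intros al be C th T p N xs Rf Sf Pf Hal Hbe HC Hth HT HN Hxs HX HD HeR HeS HeP t Ht.
  assert (Ht' : 0 <= t <= T) by lra.
  assert (HH : forall s, 0 <= s <= T -> forall j, (1 <= j <= N)%nat ->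
     horner p (Rf s j) /\ horner p (Sf s j) /\ horner p (Pf s j)).
  { intros s Hs j Hj. destruct (HX s Hs) as [A [B D]]. repeat split; apply poly_horner; auto. }
  exists (sumj N (fun j => cellint xs j (fun x => dt Rf t j x * Rf t j x) + cellint xs j (fun x => dt Sf t j x * Sf t j x))).
  split.
  { unfold energy. apply (isd_sumj N (fun j s => cellint xs j (fun x => (Rf s j x ^ 2 + Sf s j x ^ 2) / 2))).
    intros j Hj. unfold cellint. apply cell_deriv with p T; auto.
    intros s0 Hs; destruct (HH s0 Hs j Hj) as [A [B _]]; split; auto. intros x; destruct (HD t j x Ht' Hj) as [A [B _]]; split; auto. }
  destruct (HX t Ht') as [XR [XS XP]].
  pose proof (HeR t Ht' (Rf t) XR) as ER. pose proof (HeS t Ht' (Sf t) XS) as ES.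
  unfold eqR, eqS, Bterm in ER, ES. cbv zeta in ER, ES.
  set (r := Rf t) in *. set (s := Sf t) in *. set (ps := Pf t) in *.
  rewrite sumj_plus.
  assert (K1 : sumj N (fun j => cellint xs j (fun y => cfun al be (ps j y) * Derive (fun z => r j z * r j z) y))
     = 2 * sumj N (fun j => cellint xs j (fun x => cfun al be (ps j x) * r j x * Derive (r j) x))).
  { rewrite <- sumj_scal. apply sumj_ext. intros j Hj. unfold cellint.
    destruct (HH t Ht' j Hj) as [A [B D]]. apply key1 with p; auto. }
  assert (K2 : sumj N (fun j => cellint xs j (fun y => cfun al be (ps j y) * Derive (fun z => s j z * s j z) y))
     = 2 * sumj N (fun j => cellint xs j (fun x => cfun al be (ps j x) * s j x * Derive (s j) x))).
  { rewrite <- sumj_scal. apply sumj_ext. intros j Hj. unfold cellint.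
    destruct (HH t Ht' j Hj) as [A [B D]]. apply key1 with p; auto. }
  assert (K3 : sumj N (fun j => cellint xs j (fun y => cfun al be (ps j y) * Derive (fun z => s j z * r j z) y))
     = sumj N (fun j => cellint xs j (fun y => cfun al be (ps j y) * Derive (fun z => r j z * s j z) y))).
  { apply sumj_ext. intros j Hj. unfold cellint. apply RInt_ext. intros x _. f_equal. apply Derive_ext. intros; ring. }
  assert (CB : forall n, sumj n (fun j => ((cbar al be N xs ps j * avg N xs r j + / 2 * sint al be N xs ps j * jump N xs r j) * tr_minus N xs r j)) - sumj n (fun j => ((cbar al be N xs ps j * avg N xs r j + / 2 * sint al be N xs ps j * jump N xs r j) * tr_plus N xs r j)) - / 2 * sumj n (fun j => (cbar al be N xs ps j * tr_minus N xs r j * tr_minus N xs r j)) + / 2 * sumj n (fun j => (cbar al be N xs ps j * tr_plus N xs r j * tr_plus N xs r j)) + / 2 * sumj n (fun j => (cbar al be N xs ps j * tr_minus N xs s j * tr_minus N xs r j)) - / 2 * sumj n (fun j => (cbar al be N xs ps j * tr_plus N xs s j * tr_plus N xs r j)) - sumj n (fun j => ((cbar al be N xs ps j * avg N xs s j - / 2 * sint al be N xs ps j * jump N xs s j) * tr_minus N xs s j)) + sumj n (fun j => ((cbar al be N xs ps j * avg N xs s j - / 2 * sint al be N xs ps j * jump N xs s j) * tr_plus N xs s j)) - / 2 * sumj n (fun j => (cbar al be N xs ps j * tr_minus N xs r j * tr_minus N xs s j)) + / 2 * sumj n (fun j => (cbar al be N xs ps j * tr_plus N xs r j * tr_plus N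 xs s j)) + / 2 * sumj n (fun j => (cbar al be N xs ps j * tr_minus N xs s j * tr_minus N xs s j)) - / 2 * sumj n (fun j => (cbar al be N xs ps j * tr_plus N xs s j * tr_plus N xs s j)) = - sumj n (fun j => sint al be N xs ps j / 2 * (jump N xs r j ^ 2 + jump N xs s j ^ 2))).
  { induction n; cbn [sumj]; [ring | pose proof (comb_pt al be N xs r s ps (S n)); lra]. }
  rewrite (sumj_shift N (fun i => ((cbar al be N xs ps i * avg N xs r i + / 2 * sint al be N xs ps i * jump N xs r i) * tr_plus N xs r i))) in ER by (rewrite ?avg0, ?jump0, ?cbar0, ?sint0, ?trm0, ?trp0 by lia; reflexivity).
  rewrite (sumj_shift N (fun i => (cbar al be N xs ps i * tr_plus N xs r i * tr_plus N xs r i))) in ER by (rewrite ?avg0, ?jump0, ?cbar0, ?sint0, ?trm0, ?trp0 by lia; reflexivity).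
  rewrite (sumj_shift N (fun i => (cbar al be N xs ps i * tr_plus N xs s i * tr_plus N xs r i))) in ER by (rewrite ?avg0, ?jump0, ?cbar0, ?sint0, ?trm0, ?trp0 by lia; reflexivity).
  rewrite (sumj_shift N (fun i => ((cbar al be N xs ps i * avg N xs s i - / 2 * sint al be N xs ps i * jump N xs s i) * tr_plus N xs s i))) in ES by (rewrite ?avg0, ?jump0, ?cbar0, ?sint0, ?trm0, ?trp0 by lia; reflexivity).
  rewrite (sumj_shift N (fun i => (cbar al be N xs ps i * tr_plus N xs r i * tr_plus N xs s i))) in ES by (rewrite ?avg0, ?jump0, ?cbar0, ?sint0, ?trm0, ?trp0 by lia; reflexivity).
  rewrite (sumj_shift N (fun i => (cbar al be N xs ps i * tr_plus N xs s i * tr_plus N xs s i))) in ES by (rewrite ?avg0, ?jump0, ?cbar0, ?sint0, ?trm0, ?trp0 by lia; reflexivity).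
  assert (Hdx : forall j, (1 <= j <= N)%nat -> xs (j - 1)%nat < xs j).
  { intros j Hj. replace j with (S (j - 1)) at 2 by lia. apply Hxs; lia. }
  assert (N1 : 0 <= sumj N (fun j => eps al be C th xs Rf Sf Pf t j * cellint xs j (fun x => Derive (r j) x * Derive (r j) x))).
  { apply sumj_nonneg. intros j Hj. apply Rmult_le_pos. apply eps_nonneg; auto. unfold dx; specialize (Hdx j Hj); lra.
    apply cell_sq_nonneg with p. specialize (Hdx j Hj); lra. apply (HH t Ht' j Hj). }
  assert (N2 : 0 <= sumj N (fun j => eps al be C th xs Rf Sf Pf t j * cellint xs j (fun x => Derive (s j) x * Derive (s j) x))).
  { apply sumj_nonneg. intros j Hj. apply Rmult_le_pos. apply eps_nonneg; auto. unfold dx; specialize (Hdx j Hj); lra.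
    apply cell_sq_nonneg with p. specialize (Hdx j Hj); lra. apply (HH t Ht' j Hj). }
  assert (N3 : 0 <= sumj N (fun j => sint al be N xs ps j / 2 * (jump N xs r j ^ 2 + jump N xs s j ^ 2))).
  { apply sumj_nonneg. intros j Hj. apply Rmult_le_pos. pose proof (sint_nonneg al be N xs ps j); lra.
    apply Rplus_le_le_0_compat; apply pow2_ge_0. }
  specialize (CB N). lra.
Qed.
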